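(* Let $(P_n)_{n\geq 0}$ be the Pell sequence: $P_0=0$, $P_1=1$, $P_{n+1}=2P_n+P_{n-1}$ for $n\geq 1$. Let $k,l,m,n$ be positive integers. Then $P_k+2P_l=P_m+2P_n$ if and only if $k=m$ and $l=n$. *)

(* Defs.v *)
From mathcomp Require Import all_boot.

Fixpoint pell (n : nat) : nat :=
  match n with
  | 0 => 0
  | 1 => 1
  | (n'.+1 as m).+1 => 2 * pell m + pell n'
  end.

(* Main.v *)
Require Import Defs.
From mathcomp Require Import all_boot.
From mathcomp Require Import zify.

Lemma pellSS n : pell n.+2 = 2 * pell n.+1 + pell n.
Proof. by []. Qed.

Lemma pell_lt1 n : pell n < pell n.+1.
Proof.
elim: n => [//|n IH]; rewrite pellSS; lia.
Qed.

Lemma pell_lt {i j} : i < j -> pell i < pell j.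
Proof.
elim: j => [//|j IH]; rewrite ltnS leq_eqVlt => /orP[/eqP->|h].
  exact: pell_lt1.
have := IH h; have := pell_lt1 j; lia.
Qed.

Lemma pell_le {i j} : i <= j -> pell i <= pell j.
Proof. rewrite leq_eqVlt => /orP[/eqP->//|h]; exact/ltnW/pell_lt. Qed.

Lemma pell_dbl n : 2 * pell n <= pell n.+1.
Proof. case: n => [//|n]; rewrite pellSS; lia. Qed.

Lemma pell_pos {n} : 0 < n -> 0 < pell n.
Proof. by move=> h; have := pell_lt h. Qed.

Lemma pell_inj i j : pell i = pell j -> i = j.
Proof.
move=> e; case: (ltngtP i j) => h //.
  by have := pell_lt h; rewrite e ltnn.
by have := pell_lt h; rewrite e ltnn.
Qed.

Lemma key k l m n : 0 < k -> 0 < n -> k < m -> n < l ->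
  pell k + 2 * pell l = pell m + 2 * pell n -> False.
Proof.
move=> hk hn hkm hnl e.
have Pk := pell_pos hk; have Pn := pell_pos hn.
case: l hnl e => [//|i] hnl e.
have Hni : n <= i by lia.
case: (ltngtP m i.+1) => hm.
-
  have := pell_le (i:=m) (j:=i) ltac:(lia).
  have := pell_le Hni; have := pell_dbl i; lia.
-
  case: (ltngtP m i.+2) => hm2.
  + lia.
  + case: m hkm hm hm2 e => [//|[//|j]] hkm hm hm2 e.
    rewrite pellSS in e.
    have := pell_le (i:=k) (j:=j.+1) ltac:(lia).
    have := pell_lt (i:=i.+1) (j:=j.+1) ltac:(lia).
    have := pell_le (i:=i.+1) (j:=j) ltac:(lia).
    lia.
  + subst m; rewrite pellSS in e.
    case: (ltngtP k i.+1) => hk1.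
    * have := pell_le (i:=k) (j:=i) ltac:(lia); lia.
    * lia.
    * subst k; destruct i as [|h]; first lia.
      rewrite pellSS in e.
      case: (ltngtP n h.+1) => hn1.
      -- have := pell_le (i:=n) (j:=h) ltac:(lia); have := pell_lt1 h; lia.
      -- lia.
      -- subst n; have := pell_lt1 h; lia.
- subst m.
  have := pell_le Hni; have := pell_dbl i; lia.
Qed.

Theorem corollary1p1 (k l m n : nat) :
  0 < k -> 0 < l -> 0 < m -> 0 < n ->
  (pell k + 2 * pell l = pell m + 2 * pell n <-> k = m /\ l = n).
Proof.
move=> hk hl hm hn; split; last by case=> -> ->.
move=> e.
case: (ltngtP k m) => hkm.
- case: (ltngtP n l) => hnl.
  + by case: (key _ _ _ _ hk hn hkm hnl e).
  + have := pell_lt hnl; have := pell_lt hkm; lia.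
  + subst; have := pell_lt hkm; lia.
- case: (ltngtP l n) => hln.
  + by case: (key _ _ _ _ hm hl hkm hln (esym e)).
  + have := pell_lt hln; have := pell_lt hkm; lia.
  + subst; have := pell_lt hkm; lia.
- subst; split => //; apply: pell_inj; lia.
Qed.
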